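(* Let $\Gamma$ be the first Grigorchuk group with generators $a,b,c,d$, acting on the right on $\{0,1\}^{\mathbb N}$, and let $\rho=111\cdots$. For a word $w=w_1\cdots w_n$ over $\{a,b,c,d\}$ set $\delta(w)=\#\{\rho\, w_{i+1}\cdots w_n: i=0,\dots,n\}$. Call $w$ pre-reduced if it contains no two consecutive letters from $\{b,c,d\}$, and let the pre-reduction of $w$ be the word obtained from $w$ by repeatedly deleting subwords $bb,cc,dd$ and replacing subwords $bc$ or $cb$ by $d$, $cd$ or $dc$ by $b$, and $db$ or $bd$ by $c$, until it is pre-reduced. Then $\delta(w)=\delta(\text{pre-reduction of } w)$.
   Context: The first Grigorchuk group $\Gamma$ is the group of permutations of the set $\{0,1\}^{\mathbb N}$ of infinite binary sequences (acting on the right) generated by $a,b,c,d$, defined recursively for $x\in\{0,1\}$ and infinite sequences $u$ by: $(xu)a=(1-x)u$; $(0u)b=0(ua)$, $(1u)b=1(uc)$; $(0u)c=0(ua)$, $(1u)c=1(ud)$; $(0u)d=0u$, $(1u)d=1(ub)$. *)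

(* Defs.v *)
From Stdlib Require Import List Arith Relations ClassicalEpsilon.
Import ListNotations.

Inductive gen := ga | gb | gc | gd.

(* Infinite binary sequences u = u 0, u 1, u 2, ...; [false] = 0, [true] = 1. *)
Definition bseq := nat -> bool.

(* States of the Grigorchuk automaton: a generator or the identity. *)
Definition state := option gen.

(* Section of a state at the first letter x:
   (0u)b = 0(ua), (1u)b = 1(uc), (0u)c = 0(ua), (1u)c = 1(ud),
   (0u)d = 0u, (1u)d = 1(ub), (xu)a = (1-x)u. *)
Definition section (s : state) (x : bool) : state :=
  match s, x with
  | Some ga, _ => None
  | Some gb, false => Some ga
  | Some gb, true => Some gc
  | Some gc, false => Some ga
  | Some gc, true => Some gd
  | Some gd, false => None
  | Some gd, true => Some gb
  | None, _ => None
  end.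

(* The n-th letter of (u)s, computed recursively; this is the unique
   solution of the recursive definition in the paper. *)
Fixpoint act_state (s : state) (u : bseq) (n : nat) : bool :=
  match n with
  | 0 => match s with Some ga => negb (u 0) | _ => u 0 end
  | S m => act_state (section s (u 0)) (fun k => u (S k)) m
  end.

Definition act (u : bseq) (g : gen) : bseq := act_state (Some g) u.

Definition act_word (u : bseq) (w : list gen) : bseq := fold_left act w u.

Definition rho : bseq := fun _ => true.

(* Number of distinct elements of a list of infinite sequences
   (Leibniz equality of functions; classical decision). *)
Fixpoint ndistinct (l : list bseq) : nat :=
  match l with
  | [] => 0
  | x :: l' => if excluded_middle_informative (In x l') then ndistinct l'
               else S (ndistinct l')
  end.

Definition delta (w : list gen) : nat :=
  ndistinct (map (fun i => act_word rho (skipn i w)) (seq 0 (S (length w)))).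

Definition is_bcd (g : gen) : Prop := g <> ga.

Definition prereduced (w : list gen) : Prop :=
  forall p q x y, w = p ++ x :: y :: q -> ~ (is_bcd x /\ is_bcd y).

Inductive prered_rule : gen -> gen -> list gen -> Prop :=
  | rule_bb : prered_rule gb gb []
  | rule_cc : prered_rule gc gc []
  | rule_dd : prered_rule gd gd []
  | rule_bc : prered_rule gb gc [gd]
  | rule_cb : prered_rule gc gb [gd]
  | rule_cd : prered_rule gc gd [gb]
  | rule_dc : prered_rule gd gc [gb]
  | rule_db : prered_rule gd gb [gc]
  | rule_bd : prered_rule gb gd [gc].

Inductive prered_step : list gen -> list gen -> Prop :=
  | prered_step_intro p q x y r :
      prered_rule x y r -> prered_step (p ++ x :: y :: q) (p ++ r ++ q).

Definition is_prereduction (w w' : list gen) : Prop :=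
  clos_refl_trans (list gen) prered_step w w' /\ prereduced w'.

(* Main.v *)
Require Import Defs.
From Stdlib Require Import List.
From Stdlib Require Import Relations FunctionalExtensionality ClassicalEpsilon.
Import ListNotations.

Lemma act_state_ext s u u' n : (forall k, u k = u' k) -> act_state s u n = act_state s u' n.
Proof.
  revert s u u'; induction n; intros s u u' H; simpl.
  - destruct s as [[]|]; rewrite H; reflexivity.
  - rewrite H. apply IHn. intro k; apply H.
Qed.

Lemma act_none u n : act_state None u n = u n.
Proof. revert u; induction n; intros u; simpl; auto. Qed.

Definition compat (s1 s2 : state) : bool :=
  match s1, s2 with
  | Some ga, Some ga | Some ga, None | None, Some ga => true
  | Some ga, _ | _, Some ga => false
  | _, _ => true
  end.

Definition mult (s1 s2 : state) : state :=
  match s1, s2 with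
  | None, s | s, None => s
  | Some gb, Some gc | Some gc, Some gb => Some gd
  | Some gc, Some gd | Some gd, Some gc => Some gb
  | Some gb, Some gd | Some gd, Some gb => Some gc
  | _, _ => None
  end.

Lemma compose n : forall u s1 s2, compat s1 s2 = true ->
  act_state s2 (act_state s1 u) n = act_state (mult s1 s2) u n.
Proof.
  induction n; intros u s1 s2 H.
  - simpl. destruct s1 as [[]|]; destruct s2 as [[]|]; simpl in *; try discriminate;
      destruct (u 0); reflexivity.
  - change (act_state s2 (act_state s1 u) (S n)) with
      (act_state (section s2 (act_state s1 u 0)) (fun k => act_state s1 u (S k)) n).
    rewrite (act_state_ext _ (fun k => act_state s1 u (S k))
        (act_state (section s1 (u 0)) (fun k => u (S k)))) by (intro; reflexivity).
    rewrite IHn.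
    + simpl. f_equal.
      destruct s1 as [[]|]; destruct s2 as [[]|]; simpl in *; try discriminate;
      destruct (u 0); reflexivity.
    + destruct s1 as [[]|]; destruct s2 as [[]|]; simpl in *; try discriminate;
      destruct (u 0); reflexivity.
Qed.

Lemma rho_fix g : g <> ga -> act rho g = rho.
Proof.
  intro Hg. apply functional_extensionality. intro n. unfold act.
  revert g Hg; induction n; intros g Hg.
  - destruct g; simpl; congruence.
  - simpl. destruct g; try congruence; apply IHn; discriminate.
Qed.

Lemma rule_act x y r : prered_rule x y r -> forall u, act (act u x) y = act_word u r.
Proof.
  intros Hr u. apply functional_extensionality; intro n. unfold act.
  rewrite compose by (destruct Hr; reflexivity).
  destruct Hr; simpl; try apply act_none; reflexivity.
Qed.

Lemma rule_bcd x y r : prered_rule x y r -> x <> ga /\ y <> ga.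
Proof. destruct 1; split; discriminate. Qed.

Fixpoint sufs (F : list gen -> bseq) (w : list gen) : list bseq :=
  match w with
  | [] => [F []]
  | a :: w' => F (a :: w') :: sufs F w'
  end.

Lemma sufs_eq F w : map (fun i => F (skipn i w)) (seq 0 (S (length w))) = sufs F w.
Proof.
  induction w as [|a w IH]; simpl; auto.
  f_equal. rewrite <- seq_shift, map_map. simpl. exact IH.
Qed.

Fixpoint pre (F : list gen -> bseq) (p m : list gen) : list bseq :=
  match p with
  | [] => []
  | a :: p' => F (a :: p' ++ m) :: pre F p' m
  end.

Lemma sufs_app F p m : sufs F (p ++ m) = pre F p m ++ sufs F m.
Proof. induction p; simpl; auto. f_equal; auto. Qed.

Lemma pre_eq p m m' : (forall u, act_word u m = act_word u m') ->
  pre (act_word rho) p m = pre (act_word rho) p m'.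
Proof.
  intro H. induction p as [|a p IH]; simpl; auto.
  f_equal; auto.
  unfold act_word in *. simpl. rewrite !fold_left_app. apply H.
Qed.

Lemma nd_dup a l : In a l -> forall T, ndistinct (T ++ a :: l) = ndistinct (T ++ l).
Proof.
  intros Ha T; induction T as [|x T IH]; simpl.
  - destruct (excluded_middle_informative (In a l)); tauto.
  - rewrite IH.
    destruct (excluded_middle_informative (In x (T ++ a :: l)));
    destruct (excluded_middle_informative (In x (T ++ l))); auto; exfalso.
    + apply n. apply in_app_or in i. apply in_or_app. simpl in i. intuition congruence.
    + apply n. apply in_app_or in i. apply in_or_app. simpl. tauto.
Qed.

Lemma step_delta w w' : prered_step w w' -> delta w = delta w'.
Proof.
  destruct 1 as [p q x y r Hr].
  unfold delta. rewrite !sufs_eq, !sufs_app.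
  rewrite (pre_eq p (x :: y :: q) (r ++ q)).
  2:{ intro u. unfold act_word. rewrite fold_left_app. simpl.
      pose proof (rule_act _ _ _ Hr u) as E. unfold act_word in E. rewrite E. reflexivity. }
  destruct (rule_bcd _ _ _ Hr) as [Hx Hy].
  assert (Hin : In (act_word rho q) (sufs (act_word rho) q)) by (destruct q; simpl; auto).
  simpl sufs.
  rewrite (rho_fix x Hx), (rho_fix y Hy).
  rewrite (nd_dup _ (_ :: _) (or_introl eq_refl)), (nd_dup _ _ Hin).
  destruct Hr; simpl; try reflexivity;
  rewrite ?rho_fix by discriminate; simpl;
  rewrite (nd_dup _ _ Hin); reflexivity.
Qed.

Theorem lemma4p1 (w w' : list gen) :
  is_prereduction w w' -> delta w = delta w'.
Proof.
  intros [H _]. induction H.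
  - apply step_delta; auto.
  - reflexivity.
  - congruence.
Qed.
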